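(* $\mathcal{U}_2^m(\mathfrak{N})=\mathbb{N}_{\ge 2}$.
   Context: $\mathbb{N}$ denotes the non-negative integers and $\mathbb{N}_{\ge2}$ the set of integers greater than one. A numerical semigroup is a submonoid of $(\mathbb{N},+)$ with finite complement; $\mathfrak{N}$ denotes the set of all numerical semigroups. A numerical semigroup is irreducible if it cannot be written as the intersection of two numerical semigroups properly containing it. Given a numerical semigroup $S$ and irreducible numerical semigroups $S_1,\dots,S_n$, the expression $S_1\cap\dots\cap S_n$ is a factorization of $S$ (of length $n$) if $S=S_1\cap\dots\cap S_n$ and $S\neq\bigcap_{j\in J}S_j$ for every nonempty proper subset $J\subsetneq\{1,\dots,n\}$. For a positive integer $k$, $\mathcal{U}_k^m(\mathfrak{N})$ is the set of positive integers $l$ such that there exists a numerical semigroup having a factorization of length $k$ and a factorization of length $l$. *)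

(* Defs.v *)
From mathcomp Require Import all_boot.
Set Implicit Arguments. Unset Strict Implicit. Unset Printing Implicit Defensive.

Definition nset := nat -> Prop.

Definition nset_eq (A B : nset) : Prop := forall x, A x <-> B x.
Definition nset_sub (A B : nset) : Prop := forall x, A x -> B x.
Definition nset_proper (A B : nset) : Prop := nset_sub A B /\ ~ nset_eq A B.
Definition nset_cap (A B : nset) : nset := fun x => A x /\ B x.

Definition numerical_semigroup (S : nset) : Prop :=
  S 0 /\ (forall a b, S a -> S b -> S (a + b)) /\
  (exists N, forall x, N <= x -> S x).

Definition irreducible_ns (S : nset) : Prop :=
  numerical_semigroup S /\
  ~ (exists T1 T2, numerical_semigroup T1 /\ numerical_semigroup T2 /\
       nset_proper S T1 /\ nset_proper S T2 /\ nset_eq S (nset_cap T1 T2)).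

Definition big_cap n (F : 'I_n -> nset) (J : {set 'I_n}) : nset :=
  fun x => forall j, j \in J -> F j x.

Definition is_factorization (S : nset) n (F : 'I_n -> nset) : Prop :=
  (forall i, irreducible_ns (F i)) /\
  nset_eq S (big_cap F setT) /\
  (forall J : {set 'I_n}, J != set0 -> J \proper setT -> ~ nset_eq S (big_cap F J)).

Definition has_factorization_of_length (S : nset) (n : nat) : Prop :=
  exists F : 'I_n -> nset, is_factorization S F.

Definition U_m (k : nat) : nat -> Prop :=
  fun l => 0 < l /\ exists S, numerical_semigroup S /\
     has_factorization_of_length S k /\ has_factorization_of_length S l.

(* Main.v *)
Require Import Defs.
From mathcomp Require Import all_boot.
From mathcomp Require Import zify.
From Stdlib Require Import Classical.

Lemma irr_crit (S : nset) (F : nat) :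
  numerical_semigroup S -> ~ S F ->
  (forall x, ~ S x -> x < F -> S (F - x) \/ x + x = F) ->
  (forall x, F < x -> S x) -> irreducible_ns S.
Proof.
move=> NS nSF Hsym Hbig; split=> //.
have key : forall T, numerical_semigroup T -> nset_proper S T -> ~ T F -> False.
  move=> T [T0 [Tadd _]] [sub neq] nTF; apply: neq => y; split; first exact: sub.
  move=> Ty; apply: NNPP => nSy.
  have [lt|gt|eq] := ltngtP y F.
  - case: (Hsym y nSy lt) => [Sd|dbl].
      by apply: nTF; have := Tadd _ _ Ty (sub _ Sd); rewrite subnKC // ltnW.
    by apply: nTF; rewrite -dbl; apply: Tadd.
  - by apply: nSy; apply: Hbig.
  - by apply: nTF; rewrite -eq.
move=> [T1 [T2 [N1 [N2 [P1 [P2 E]]]]]].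
have : ~ (T1 F /\ T2 F) by move=> /E.
move=> h; case: (classic (T1 F)) => h1.
  by apply: (key T2) => // h2; apply: h.
by apply: (key T1).
Qed.

Lemma ess n (F : 'I_n -> nset) (S : nset) :
  (forall i, exists x, ~ S x /\ forall j, j != i -> F j x) ->
  forall J : {set 'I_n}, J != set0 -> J \proper setT -> ~ nset_eq S (big_cap F J).
Proof.
move=> H J _ /properP [_ [i _ iJ]] E.
have [x [nS Fx]] := H i; apply: nS; apply/E => j jJ; apply: Fx.
by apply/negP => /eqP ji; rewrite -ji jJ in iJ.
Qed.

Definition T (k : nat) : nset := fun x => x = 0 \/ (k <= x /\ x <> 2 * k - 1).
Definition Bs (l : nat) : nset := fun x => (exists y, x = 2 * y) \/ 4 * l <= x.
Definition Ss (l : nat) : nset :=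
  fun x => x = 0 \/ (2 * l <= x /\ ((exists y, x = 2 * y) \/ 4 * l <= x)).

Lemma even_or_odd x : (exists y, x = 2 * y) \/ x = 2 * (x %/ 2) + 1.
Proof.
case: (boolP (x %% 2 == 0)) => /eqP h; [left; exists (x %/ 2)| right]; lia.
Qed.

Lemma T_irr k : 0 < k -> irreducible_ns (T k).
Proof.
move=> k0; apply: (@irr_crit _ (2 * k - 1)).
- split; first by left.
  split; last by exists (2 * k) => x hx; right; lia.
  rewrite /T => a b [->|[ha hb]] [->|[ha' hb']]; try (by left; lia); right; lia.
- rewrite /T; lia.
- rewrite /T => x hx lt; left; right; lia.
- rewrite /T => x lt; right; lia.
Qed.

Lemma B_irr l : 0 < l -> irreducible_ns (Bs l).
Proof.
move=> l0; apply: (@irr_crit _ (4 * l - 1)).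
- split; first by left; exists 0.
  split; last by exists (4 * l) => x hx; right.
  rewrite /Bs => a b [[y ->]|ha] [[y' ->]|hb]; try (right; lia).
  by left; exists (y + y'); lia.
- rewrite /Bs => -[[y hy]|h]; lia.
- rewrite /Bs => x hx lt; left; left.
  case: (even_or_odd x) => [h|h]; first by exfalso; apply: hx; left.
  exists (2 * l - 1 - x %/ 2); lia.
- rewrite /Bs => x lt; right; lia.
Qed.

Lemma I2_cases (j : 'I_2) : j = ord0 \/ j = ord_max.
Proof. case: j => [[|[|k]] h]; [left|right|]; try (by apply: val_inj). by []. Qed.

Lemma Ss_ns l : numerical_semigroup (Ss l).
Proof.
split; first by left.
split; last by exists (4 * l) => x hx; right; split; [lia|right].
rewrite /Ss => a b [->|[ha hb]] [->|[ha' hb']]; try (by rewrite ?add0n ?addn0; (left + right)).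
right; split; first lia.
case: hb => [[y hy]|hy]; last by right; lia.
case: hb' => [[y' hy']|hy']; last by right; lia.
by left; exists (y + y'); lia.
Qed.

Lemma len2 l : 2 <= l -> has_factorization_of_length (Ss l) 2.
Proof.
move=> l2.
exists (fun j : 'I_2 => if val j == 0 then T (2 * l) else Bs l).
split; [|split].
- move=> i; case: (I2_cases i) => ->; [apply: T_irr|apply: B_irr]; lia.
- move=> x; split.
  + move=> Sx j _; case: (I2_cases j) => -> /=; rewrite /T /Bs.
      case: Sx => [->|[h1 [[y hy]|h2]]]; [by left|right; lia|right; lia].
    case: Sx => [->|[h1 h2]]; [by left; exists 0|exact: h2].
  + move=> H; have := H ord0 (in_setT _); have := H ord_max (in_setT _) => /=.
    rewrite /T /Bs /Ss => hb [->|[ha hne]]; first by left.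
    by right.
- apply: ess => i; case: (I2_cases i) => ->.
  + exists 2; split; first by rewrite /Ss; lia.
    move=> j; case: (I2_cases j) => -> //= _; rewrite /Bs; left; by exists 1.
  + exists (2 * l + 1); split.
      rewrite /Ss => -[|[_ [[y hy]|hy]]]; lia.
    move=> j; case: (I2_cases j) => -> //= _; rewrite /T; right; lia.
Qed.

Lemma lenl l : 0 < l -> has_factorization_of_length (Ss l) l.
Proof.
move=> l0.
exists (fun j : 'I_l => T (l + j + 1)).
split; [|split].
- move=> i; apply: T_irr; lia.
- move=> x; split.
  + move=> Sx j _; have jl := ltn_ord j; rewrite /T.
    case: Sx => [->|[h1 [[y hy]|h2]]]; [by left|right; lia|right; lia].
  + move=> H; have hp : l.-1 < l by lia.
    have := H (Ordinal hp) (in_setT _).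
    rewrite /T /Ss /= => -[->|[h1 h2]]; first by left.
    right; split; first lia.
    case: (even_or_odd x) => [h|h]; first by left.
    case: (leqP (4 * l) x) => hx; first by right.
    have hq : x %/ 2 - l < l by lia.
    have := H (Ordinal hq) (in_setT _); rewrite /T /= => -[|[_ hh]]; lia.
- apply: ess => i; exists (2 * l + 2 * i + 1); split.
    have il := ltn_ord i.
    rewrite /Ss => -[|[_ [[y hy]|hy]]]; lia.
  move=> j ji; have jl := ltn_ord j; have il := ltn_ord i.
  have jn : (j : nat) <> i by move=> h; move: ji; rewrite (val_inj h) eqxx.
  rewrite /T; right; lia.
Qed.

Theorem mainTheorem7 : forall l : nat, U_m 2 l <-> 2 <= l.
Proof.
move=> l; split.
- move=> [l0 [S [NS [[G [Girr [GE Gess]]] [F [Firr [FE _]]]]]]].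
  case: (leqP 2 l) => // l1.
  have e1 : l = 1 by lia.
  subst l; exfalso.
  have F0S : nset_eq (F ord0) S.
    move=> x; split.
      by move=> h; apply/FE => j _; rewrite (ord1 j).
    by move=> /FE h; apply: h; apply: in_setT.
  have Gsing : forall i, ~ nset_eq S (G i).
    move=> i hi; apply: (Gess [set i]).
    + by apply/set0Pn; exists i; rewrite set11.
    + rewrite properT; apply/negP => /eqP h.
      case: (I2_cases i) => ei.
        by have := in_setT (ord_max : 'I_2); rewrite -h in_set1 ei.
      by have := in_setT (ord0 : 'I_2); rewrite -h in_set1 ei.
    + move=> x; split.
        by move=> /hi h j /set1P ->.
      by move=> h; apply/hi; apply: h; rewrite set11.
  case: (Firr ord0) => _ nred; apply: nred.
  exists (G ord0), (G ord_max).
  have prop : forall i, nset_proper (F ord0) (G i).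
    move=> i; split.
      by move=> x /F0S /GE h; apply: h; apply: in_setT.
    move=> h; apply: (Gsing i) => x; rewrite -h; exact: (iff_sym (F0S x)).
  split; first by case: (Girr ord0).
  split; first by case: (Girr ord_max).
  split; first exact: prop.
  split; first exact: prop.
  move=> x; rewrite F0S GE; split.
    by move=> h; split; apply: h; apply: in_setT.
  by move=> [h0 h1] j _; case: (I2_cases j) => ->.
- move=> l2; split; first lia.
  exists (Ss l); split; first exact: Ss_ns.
  split; first exact: len2.
  apply: lenl; lia.
Qed.
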